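(* Let $S=(s_{ij})$ be a real matrix of order $n+1$ and $C=(c_{ij})$ a real matrix of order $n$, with spectra (counted with multiplicities) $\sigma(S)=(\lambda_1,\ldots,\lambda_{n+1})$ and $\sigma(C)=(\mu_1,\ldots,\mu_n)$. Suppose $s_{ij}\ge|c_{ij}|$ for $1\le i,j\le n$, $s_{i,n+1}\ge0$ for $i=1,\ldots,n+1$, and let $\varphi^{(1)}_{n+1,i},\varphi^{(2)}_{n+1,i}\ge0$ ($i=1,\ldots,n$) satisfy $\varphi^{(1)}_{n+1,i}+\varphi^{(2)}_{n+1,i}=s_{n+1,i}$. Then for every $0\le\gamma\le1$, the nonnegative $(2n+1)\times(2n+1)$ matrices $M_{\pm\gamma}$ defined as follows have spectra $(\lambda_1,\ldots,\lambda_{n+1},\pm\gamma\mu_1,\ldots,\pm\gamma\mu_n)$ respectively: for $1\le i,j\le n$, the entries of $M_{\pm\gamma}$ in rows $2i-1,2i$ and columns $2j-1,2j$ form the block $\begin{pmatrix}\frac{s_{ij}\pm\gamma c_{ij}}{2}&\frac{s_{ij}\mp\gamma c_{ij}}{2}\\ \frac{s_{ij}\mp\gamma c_{ij}}{2}&\frac{s_{ij}\pm\gamma c_{ij}}{2}\end{pmatrix}$; the entries in rows $2i-1,2i$ and column $2n+1$ are both $s_{i,n+1}$; the entries in row $2n+1$ and columns $2j-1,2j$ are $\varphi^{(1)}_{n+1,j},\varphi^{(2)}_{n+1,j}$; and the $(2n+1,2n+1)$ entry is $s_{n+1,n+1}$.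
   Context: Spectra are counted with multiplicities. Nonnegative means entrywise nonnegative. *)

(* Defs.v *)
From HB Require Import structures.
From mathcomp Require Import all_boot all_order all_algebra.
From mathcomp Require Import Rstruct complex.
From Stdlib Require Import Reals.
Set Implicit Arguments. Unset Strict Implicit. Unset Printing Implicit Defensive.
Import Order.TTheory GRing.Theory Num.Theory.
Local Open Scope ring_scope.

Notation RR := Rdefinitions.R.

Definition is_spectrum (m : nat) (A : 'M[RR]_m) (s : seq RR[i]) : Prop :=
  map_poly (real_complex RR) (char_poly A) = \prod_(x <- s) ('X - x%:P).

(* Entry (i,j) of a matrix, addressed by 0-based natural numbers
   (0 outside the range; only used inside the range below). *)
Definition ent (m p : nat) (A : 'M[RR]_(m, p)) (i j : nat) : RR :=
  match insub i, insub j with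
  | Some i', Some j' => A i' j'
  | _, _ => 0
  end.

(* The (2n+1)x(2n+1) matrix M_{eps*gamma}, eps = +1 or -1, 0-based indices:
   paper rows 2i-1, 2i (1-based, 1<=i<=n) are 0-based rows 2(i-1), 2(i-1)+1,
   so the block index is k./2 and the position within the block is odd k.
   phi1, phi2 : 'rV_n hold phi^(1)_{n+1,j}, phi^(2)_{n+1,j}. *)
Definition Mgam (n : nat) (S : 'M[RR]_n.+1) (C : 'M[RR]_n)
    (phi1 phi2 : 'rV[RR]_n) (eps gamma : RR) : 'M[RR]_((2 * n).+1) :=
  \matrix_(k < (2 * n).+1, l < (2 * n).+1)
    if (ltn k (2 * n)) then
      if (ltn l (2 * n)) then
        (if odd k == odd l
         then (ent S k./2 l./2 + eps * gamma * ent C k./2 l./2) / 2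
         else (ent S k./2 l./2 - eps * gamma * ent C k./2 l./2) / 2)
      else ent S k./2 n
    else
      if (ltn l (2 * n)) then
        (if odd l then ent phi2 0 l./2 else ent phi1 0 l./2)
      else ent S n n.

Definition nonneg_mx (m p : nat) (A : 'M[RR]_(m, p)) : Prop :=
  forall i j, 0 <= A i j.

(* Main.v *)
Require Import Defs.
From HB Require Import structures.
From mathcomp Require Import all_boot all_order all_algebra.
From mathcomp Require Import Rstruct complex.
From Stdlib Require Import Reals.
From mathcomp Require Import ring lra zify.
Import Order.TTheory GRing.Theory Num.Theory.
Local Open Scope ring_scope.
Lemma size_spec {F : fieldType} {n} {A : 'M[F]_n} {s : seq F} :
  char_poly A = \prod_(x <- s) ('X - x%:P) -> size s = n.
Proof.
move=> h; have := size_char_poly A; rewrite h size_prod_XsubC; by case.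
Qed.

Lemma prod_const_seq (R : comNzRingType) (T : Type) (s : seq T) (c : R) :
  \prod_(x <- s) c = c ^+ size s.
Proof. by elim: s => [|x s IH]; rewrite ?big_nil ?big_cons ?IH ?exprS. Qed.

Lemma char_polyZ (F : fieldType) n (a : F) (A : 'M[F]_n) (s : seq F) :
  char_poly A = \prod_(x <- s) ('X - x%:P) ->
  char_poly (a *: A) = \prod_(x <- s) ('X - (a * x)%:P).
Proof.
move=> h; have hs := size_spec h.
have [->|a0] := eqVneq a 0.
  rewrite scale0r char_poly_trig; last first.
    by apply/is_trig_mxP => i j _; rewrite !mxE.
  rewrite (eq_bigr (fun _ => 'X)); last by move=> i _; rewrite mxE subr0.
  rewrite [RHS](eq_bigr (fun _ => 'X)); last by move=> i _; rewrite mul0r subr0.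
  by rewrite prodr_const card_ord prod_const_seq hs.
pose q : {poly F} := a^-1 *: 'X.
have E : char_poly_mx (a *: A) = a%:P *: map_mx (comp_poly q) (char_poly_mx A).
  apply/matrixP => i j; rewrite /char_poly_mx !mxE.
  rewrite rmorphB /= comp_polyC rmorphMn /= comp_polyX.
  rewrite mulrBr mulrnAr mul_polyC /q scalerA mulfV // scale1r polyCM.
  done.
rewrite /char_poly E detZ (det_map_mx (comp_poly q)) /= -/(char_poly A) h.
rewrite rmorph_prod /= -hs -prod_const_seq -big_split /=.
apply: eq_bigr => x _; rewrite rmorphB /= comp_polyX comp_polyC.
by rewrite mulrBr mul_polyC scalerA mulfV // scale1r polyCM.
Qed.

Lemma ent_ord m p (A : 'M[RR]_(m, p)) (i : 'I_m) (j : 'I_p) :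
  ent A i j = A i j.
Proof. by rewrite /ent !valK. Qed.

Lemma sum_pick (R : pzRingType) (N a : nat) (f : nat -> R) :
  \sum_(i < N) (((i : nat) == a)%:R * f i) = if (a < N)%nat then f a else 0.
Proof.
elim: N => [|N IH]; first by rewrite big_ord0.
rewrite big_ord_recr /= IH.
case: (ltngtP a N) => h.
- by rewrite ltnS ltnW // mul0r addr0.
- by rewrite ltnS leqNgt h /= mul0r addr0.
- by rewrite h ltnSn mul1r add0r.
Qed.

Lemma sum_pick2 (R : pzRingType) (N c j : nat) (f : nat -> R) :
  \sum_(i < N) ((j == i + c)%nat%:R * f i) =
    if ((c <= j) && (j - c < N))%nat then f (j - c)%nat else 0.
Proof.
case: (leqP c j) => h /=.
  rewrite -(sum_pick _ N (j - c)%nat f).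
  apply: eq_bigr => i _.
  have -> // : (j == i + c)%nat = ((i : nat) == j - c)%nat.
  apply/eqP/eqP => [->|->]; [by rewrite addnK | by rewrite subnK].
rewrite big1 // => i _; rewrite [j == _]eqn_leq.
have -> : (i + c <= j)%nat = false by apply/negbTE; rewrite -ltnNge; apply: (leq_trans h); apply: leq_addl.
by rewrite andbF mul0r.
Qed.

Lemma sum_pickS (R : pzRingType) (N a : nat) (f : nat -> R) :
  \sum_(i < N) ((a == (i : nat))%:R * f i) = if (a < N)%nat then f a else 0.
Proof. rewrite -sum_pick; apply: eq_bigr => i _; by rewrite eq_sym. Qed.

Lemma mul2E m : (2 * m)%nat = m.*2.
Proof. by rewrite -mul2n. Qed.

Lemma sum_pair (R : nmodType) n (f : nat -> R) :
  \sum_(l < (2*n).+1) f l = \sum_(m < n) (f m.*2 + f m.*2.+1) + f n.*2.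
Proof.
rewrite mul2E big_ord_recr /=; congr (_ + _).
elim: n => [|n IH]; first by rewrite !big_ord0.
by rewrite doubleS !big_ord_recr /= IH -addrA.
Qed.

Section Main.
Variables (n : nat) (S : 'M[RR]_n.+1) (C : 'M[RR]_n) (phi1 phi2 : 'rV[RR]_n).
Variables (eps gamma : RR).

Notation RT := (GRing.NzRing.sort RR).
Definition g : RT := eps * gamma.
Definition sg (k : nat) : RT := if odd k then -1 else 1.

Definition fM (k l : nat) : RT :=
    if (ltn k (2 * n)) then
      if (ltn l (2 * n)) then
        (if odd k == odd l
         then (ent S k./2 l./2 + eps * gamma * ent C k./2 l./2) / 2
         else (ent S k./2 l./2 - eps * gamma * ent C k./2 l./2) / 2)
      else ent S k./2 n
    else
      if (ltn l (2 * n)) then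
        (if odd l then ent phi2 0 l./2 else ent phi1 0 l./2)
      else ent S n n.

Lemma MgamE (k l : 'I_(2 * n).+1) : Mgam S C phi1 phi2 eps gamma k l = fM k l.
Proof. by rewrite mxE. Qed.

Lemma ltn_dbl m : (m.*2 < 2 * n)%nat = (m < n)%nat.
Proof. by rewrite mul2E ltn_double. Qed.
Lemma ltn_dblS m : (m.*2.+1 < 2 * n)%nat = (m < n)%nat.
Proof. by rewrite mul2E ltn_Sdouble. Qed.

Lemma fM_top_e k m : (k < 2 * n)%nat -> (m < n)%nat ->
  fM k m.*2 = (ent S k./2 m + sg k * g * ent C k./2 m) / 2.
Proof.
move=> hk hm; rewrite /fM /ltn /= hk ltn_dbl hm odd_double doubleK /sg /g.
by case: (odd k) => /=; ring.
Qed.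

Lemma fM_top_o k m : (k < 2 * n)%nat -> (m < n)%nat ->
  fM k m.*2.+1 = (ent S k./2 m - sg k * g * ent C k./2 m) / 2.
Proof.
move=> hk hm; rewrite /fM /ltn /= hk ltn_dblS hm odd_double uphalf_double /sg /g.
by case: (odd k) => /=; ring.
Qed.

Lemma fM_top_l k : (k < 2 * n)%nat -> fM k n.*2 = ent S k./2 n.
Proof. by move=> hk; rewrite /fM /ltn /= hk ltn_dbl ltnn. Qed.

Lemma fM_bot_e m : (m < n)%nat -> fM n.*2 m.*2 = ent phi1 0 m.
Proof. by move=> hm; rewrite /fM /ltn /= ltn_dbl ltnn ltn_dbl hm odd_double doubleK. Qed.
Lemma fM_bot_o m : (m < n)%nat -> fM n.*2 m.*2.+1 = ent phi2 0 m.
Proof. by move=> hm; rewrite /fM /ltn /= ltn_dbl ltnn ltn_dblS hm odd_double uphalf_double. Qed.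
Lemma fM_bot_l : fM n.*2 n.*2 = ent S n n.
Proof. by rewrite /fM /ltn /= ltn_dbl ltnn. Qed.


Definition Tf (k i : nat) : RT :=
  (i == k./2)%:R + (k < 2 * n)%nat%:R * (i == k./2 + n.+1)%nat%:R * sg k.
Definition Tm : 'M[RR]_((2 * n).+1) := \matrix_(k, i) Tf k i.
Definition fB (i j : nat) : RT :=
  if (i <= n)%nat then
    (if (j <= n)%nat then ent S i j
     else (i == n)%:R * (ent phi1 0 (j - n.+1)%nat - ent phi2 0 (j - n.+1)%nat))
  else (if (j <= n)%nat then 0 else g * ent C (i - n.+1)%nat (j - n.+1)%nat).
Definition Bm : 'M[RR]_((2 * n).+1) := \matrix_(i, j) fB i j.

Lemma sg_dbl m : sg m.*2 = 1.
Proof. by rewrite /sg odd_double. Qed.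
Lemma sg_dblS m : sg m.*2.+1 = -1.
Proof. by rewrite /sg oddS odd_double. Qed.
Lemma half_dblS m : (m.*2.+1)./2 = m.
Proof. by rewrite -uphalfE uphalf_double. Qed.

Lemma Tf_e m j : (m < n)%nat -> Tf m.*2 j = (j == m)%:R + (j == m + n.+1)%nat%:R.
Proof. by move=> hm; rewrite /Tf ltn_dbl hm doubleK sg_dbl mulr1 mulr1n mul1r. Qed.
Lemma Tf_o m j : (m < n)%nat -> Tf m.*2.+1 j = (j == m)%:R - (j == m + n.+1)%nat%:R.
Proof. by move=> hm; rewrite /Tf ltn_dblS hm half_dblS sg_dblS mulr1n mul1r mulrN1. Qed.
Lemma Tf_l j : Tf n.*2 j = (j == n)%:R.
Proof. by rewrite /Tf ltn_dbl ltnn doubleK mulr0n !mul0r addr0. Qed.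

Lemma MT_TB :
  (forall j, (j < n)%nat -> ent phi1 0 j + ent phi2 0 j = ent S n j) ->
  Mgam S C phi1 phi2 eps gamma *m Tm = Tm *m Bm.
Proof.
move=> hphi; apply/matrixP => k j; rewrite !mxE.
under eq_bigr do rewrite !mxE.
under [RHS]eq_bigr do rewrite !mxE.
rewrite (sum_pair _ _ (fun l => fM k l * Tf l j)).
rewrite (eq_bigr (fun m : 'I_n => ((j : nat) == m)%:R * (fM k m.*2 + fM k m.*2.+1)
    + ((j : nat) == m + n.+1)%nat%:R * (fM k m.*2 - fM k m.*2.+1))); last first.
  by move=> m _; rewrite Tf_e // Tf_o //; ring.
rewrite big_split /= (sum_pickS _ n j (fun m => fM k m.*2 + fM k m.*2.+1)).
rewrite (sum_pick2 _ n n.+1 j (fun m => fM k m.*2 - fM k m.*2.+1)) Tf_l.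
rewrite (eq_bigr (fun i : 'I_(2 * n).+1 => ((k./2 == i)%:R * fB i j)
   + ((k < 2 * n)%nat%:R * sg k) * ((k./2 + n.+1 == i)%nat%:R * fB i j))); last first.
  by move=> i _; rewrite /Tf (eq_sym (i:nat) k./2) (eq_sym (i:nat) (k./2 + n.+1)%nat); ring.
rewrite big_split /= -mulr_sumr (sum_pickS _ _ _ (fun i => fB i j)) (sum_pickS _ _ _ (fun i => fB i j)).
have hk := ltn_ord k; have hj := ltn_ord j.
have ek := odd_double_half k.
have -> : (k./2 < (2 * n).+1)%nat by lia.
case: (ltnP k (2 * n)%nat) => hk2.
  have ha : (k./2 < n)%nat by lia.
  have -> : (k./2 + n.+1 < (2 * n).+1)%nat by lia.
  rewrite mulr1n mul1r /fB.
  rewrite (_ : (k./2 + n.+1 <= n)%nat = false); last by lia.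
  rewrite (_ : (k./2 <= n)%nat = true); last by lia.
  rewrite (_ : (k./2 == n) = false); last by apply/eqP; lia.
  case: (ltngtP j n) => hj'.
  - cbv iota beta delta [andb].
    rewrite fM_top_e // fM_top_o // mulr0n !mulr0 !addr0; by field.
  - have hj2 : (j - n.+1 < n)%nat by lia.
    rewrite hj2; cbv iota beta delta [andb].
    rewrite fM_top_e // fM_top_o // mulr0n addnK; by field.
  - rewrite hj'; cbv iota beta delta [andb].
    rewrite fM_top_l // mulr1n !mulr0 mulr1 !addr0 add0r.
    by [].
have ek2 : (k : nat) = n.*2 by lia.
rewrite ek2 doubleK mulr0n !mul0r addr0 /fB leqnn eqxx mulr1n mul1r.
case: (ltngtP j n) => hj'.
- cbv iota beta delta [andb].
  by rewrite fM_bot_e // fM_bot_o // mulr0n mulr0 !addr0 hphi.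
- have hj2 : (j - n.+1 < n)%nat by lia.
  rewrite hj2; cbv iota beta delta [andb].
  by rewrite fM_bot_e // fM_bot_o // mulr0n mulr0 addr0 add0r.
- rewrite hj'; cbv iota beta delta [andb].
  by rewrite fM_bot_l mulr1n mulr1 !add0r.
Qed.

Definition wt (i : nat) : RT := if i == n then 1 else 2^-1.
Definition Tif (i k : nat) : RT :=
  wt i * (k./2 == i)%:R + (n < i)%nat%:R * (k./2 + n.+1 == i)%nat%:R * sg k / 2.
Definition Tim : 'M[RR]_((2 * n).+1) := \matrix_(i, k) Tif i k.

Lemma Tif_e i m : Tif i m.*2 = wt i * (m == i)%:R + (n < i)%nat%:R * (m + n.+1 == i)%nat%:R / 2.
Proof. by rewrite /Tif doubleK sg_dbl mulr1. Qed.
Lemma Tif_o i m : Tif i m.*2.+1 = wt i * (m == i)%:R - (n < i)%nat%:R * (m + n.+1 == i)%nat%:R / 2.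
Proof. by rewrite /Tif half_dblS sg_dblS mulrN1 mulNr. Qed.

Lemma TimT : Tim *m Tm = 1%:M.
Proof.
apply/matrixP => i j; rewrite !mxE.
under eq_bigr do rewrite !mxE.
rewrite (sum_pair _ _ (fun l => Tif i l * Tf l j)).
rewrite (eq_bigr (fun m : 'I_n => ((i : nat) == m)%:R * (2 * wt i * ((j : nat) == m)%:R)
    + ((i : nat) == m + n.+1)%nat%:R * ((n < i)%nat%:R * ((j : nat) == m + n.+1)%nat%:R))); last first.
  move=> m _; rewrite Tf_e // Tf_o // Tif_e Tif_o.
  rewrite (eq_sym (m : nat) i) (eq_sym (m + n.+1)%nat i).
  by field.
rewrite big_split /= (sum_pickS _ n i (fun m => 2 * wt i * ((j : nat) == m)%:R)).
rewrite (sum_pick2 _ n n.+1 i (fun m => (n < i)%nat%:R * ((j : nat) == m + n.+1)%nat%:R)) Tf_l.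
rewrite /Tif doubleK /wt.
have hi := ltn_ord i; have hj := ltn_ord j.
rewrite (_ : ((n + n.+1)%nat == i) = false); last by apply/eqP; lia.
rewrite mulr0n mulr0 !mul0r addr0.
have -> : (i == j) = ((j : nat) == i) by rewrite eq_sym.
case: (ltngtP i n) => hi'; cbv iota beta delta [andb].
- rewrite mulr0n mulr0 mul0r !addr0 divff ?mul1r //.
  by rewrite pnatr_eq0.
- have hi2 : (i - n.+1 < n)%nat by lia.
  rewrite hi2; cbv iota.
  by rewrite subnK // mulr1n mul1r mulr0n mulr0 mul0r add0r addr0.
- by rewrite hi' mulr1n !mul1r !add0r.
Qed.

Definition Xm : 'M[RR]_(n.+1, n) :=
  \matrix_(i, j) (((i : nat) == n)%:R * (phi1 0 j - phi2 0 j)).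

Lemma e_dim : (n.+1 + n = (2 * n).+1)%nat.
Proof. lia. Qed.

Lemma Bm_block : Bm = castmx (e_dim, e_dim) (block_mx S Xm 0 (g *: C)).
Proof.
apply/matrixP => i j; rewrite castmxE /block_mx /col_mx /row_mx !mxE /fB.
set i1 := cast_ord _ i; set j1 := cast_ord _ j.
have -> : (i : nat) = i1 by []. have -> : (j : nat) = j1 by [].
clearbody i1 j1.
case: (@splitP n.+1 n i1) => i' ->; cbv iota beta.
  have hi : (i' <= n)%nat := ltn_ord i'.
  rewrite mxE; case: (fintype.split j1) (splitK j1) => j' <- /=; rewrite ?mxE hi.
    have hj : (j' <= n)%nat := ltn_ord j'.
    by rewrite hj ent_ord.
  rewrite (_ : (n.+1 + j' <= n)%nat = false); last by lia.
  by rewrite addKn (ent_ord _ _ phi1 ord0 j') (ent_ord _ _ phi2 ord0 j').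
rewrite (_ : (n.+1 + i' <= n)%nat = false); last by lia.
rewrite mxE; case: (fintype.split j1) (splitK j1) => j' <- /=; rewrite ?mxE.
  have hj : (j' <= n)%nat := ltn_ord j'.
  by rewrite hj.
rewrite (_ : (n.+1 + j' <= n)%nat = false); last by lia.
by rewrite !addKn ent_ord.
Qed.



End Main.

Lemma char_poly_cast (R : nzRingType) m1 m2 (e : m1 = m2) (A : 'M[R]_m1) :
  char_poly (castmx (e, e) A) = char_poly A.
Proof. by case: m2 / e; rewrite castmx_id. Qed.

Lemma char_poly_ublock (R : comNzRingType) m1 m2 (A : 'M[R]_m1) (B : 'M[R]_(m1, m2)) (D : 'M[R]_m2) :
  char_poly (block_mx A B 0 D) = char_poly A * char_poly D.
Proof.
rewrite /char_poly /char_poly_mx (scalar_mx_block m1 m2 'X) map_block_mx map_mx0.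
by rewrite opp_block_mx add_block_mx oppr0 addr0 det_ublock.
Qed.

Lemma char_poly_sim (F : fieldType) m (A B T Ti : 'M[F]_m) :
  A *m T = T *m B -> Ti *m T = 1%:M -> char_poly A = char_poly B.
Proof.
move=> hAB hT; have [_ uT] := mulmx1_unit hT.
have E : char_poly_mx A *m map_mx polyC T = map_mx polyC T *m char_poly_mx B.
  rewrite /char_poly_mx mulmxBl mulmxBr mul_scalar_mx mul_mx_scalar -!map_mxM hAB.
  done.
have := congr1 determinant E; rewrite !det_mulmx det_map_mx [X in _ = X]mulrC.
move/mulIf; apply; rewrite polyC_eq0 -unitfE -unitmxE //.
Qed.


Lemma spec_gen n (S : 'M[RR]_n.+1) (C : 'M[RR]_n) (phi1 phi2 : 'rV[RR]_n) (eps gamma : RR)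
   (lam mu : seq RR[i]) :
  is_spectrum S lam -> is_spectrum C mu ->
  (forall j, (j < n)%nat -> ent phi1 0 j + ent phi2 0 j = ent S n j) ->
  is_spectrum (Mgam S C phi1 phi2 eps gamma)
    (lam ++ [seq ((eps * gamma)%:C * x)%C | x <- mu]).
Proof.
move=> hS hC hphi; rewrite /is_spectrum.
rewrite (char_poly_sim _ _ _ _ _ _ (MT_TB _ _ _ _ _ eps gamma hphi) (TimT n)).
rewrite Bm_block char_poly_cast char_poly_ublock rmorphM /= hS big_cat /= big_map.
congr (_ * _).
move: hC; rewrite /is_spectrum map_char_poly => hC.
by rewrite map_char_poly map_mxZ (char_polyZ _ _ _ _ _ hC).
Qed.

Lemma key_nn (s c t e ga : RR) : `|c| <= s -> 0 <= ga <= 1 -> `|t| = 1 -> `|e| = 1 ->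
  0 <= (s + t * (e * ga) * c) / 2 /\ 0 <= (s - t * (e * ga) * c) / 2.
Proof.
move=> hc /andP[h0 h1] ht he.
have hn : `|t * (e * ga) * c| <= `|c|.
  rewrite !normrM ht he (ger0_norm h0) !mul1r -[X in _ <= X]mul1r.
  by apply: ler_wpM2r.
have h2 := lerNnormlW (lexx `|t * (e * ga) * c|).
have h3 := ler_normlW (lexx `|t * (e * ga) * c|).
split; lra.
Qed.

Lemma ent_lt {m p} (A : 'M[RR]_(m, p)) {i j} (hi : (i < m)%nat) (hj : (j < p)%nat) :
  ent A i j = A (Ordinal hi) (Ordinal hj).
Proof. exact: (ent_ord _ _ A (Ordinal hi) (Ordinal hj)). Qed.

Lemma nonneg_gen n (S : 'M[RR]_n.+1) (C : 'M[RR]_n) (phi1 phi2 : 'rV[RR]_n) (eps gamma : RR) :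
  `|eps| = 1 ->
  (forall i j : 'I_n, `|C i j| <= S (widen_ord (leqnSn n) i) (widen_ord (leqnSn n) j)) ->
  (forall i : 'I_n.+1, 0 <= S i ord_max) ->
  (forall j : 'I_n, 0 <= phi1 0 j /\ 0 <= phi2 0 j) ->
  0 <= gamma <= 1 ->
  nonneg_mx (Mgam S C phi1 phi2 eps gamma).
Proof.
move=> he hSC hS hphi hg k l; rewrite MgamE.
have hk := ltn_ord k; have hl := ltn_ord l.
have el := odd_double_half l.
case: (ltnP k (2 * n)%nat) => hk2.
  have ha : (k./2 < n)%nat by lia.
  have hsg : `|sg k| = 1 by rewrite /sg; case: (odd k); rewrite ?normrN normr1.
  case: (ltnP l (2 * n)%nat) => hl2.
    have hb : (l./2 < n)%nat by lia.
    have hC : `|ent C k./2 l./2| <= ent S k./2 l./2.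
      rewrite (ent_lt C ha hb).
      have -> : ent S k./2 l./2 = S (widen_ord (leqnSn n) (Ordinal ha)) (widen_ord (leqnSn n) (Ordinal hb)) := ent_ord _ _ S (widen_ord (leqnSn n) (Ordinal ha)) (widen_ord (leqnSn n) (Ordinal hb)).
      exact: (hSC (Ordinal ha) (Ordinal hb)).
    have [h1 h2] := key_nn _ _ _ _ _ hC hg hsg he.
    rewrite -el; case: (odd l); rewrite ?add1n ?add0n.
      by rewrite fM_top_o // /g.
    by rewrite fM_top_e // /g.
  have -> : (l : nat) = n.*2 by lia.
  rewrite fM_top_l // (ent_lt S (ltnW ha : (k./2 < n.+1)%nat) (ltnSn n)).
  exact: (hS (Ordinal (ltnW ha : (k./2 < n.+1)%nat))).
have -> : (k : nat) = n.*2 by lia.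
case: (ltnP l (2 * n)%nat) => hl2.
  have hb : (l./2 < n)%nat by lia.
  have [h1 h2] := hphi (Ordinal hb).
  rewrite -el; case: (odd l); rewrite ?add1n ?add0n.
    by rewrite fM_bot_o // (ent_lt phi2 (ltn0Sn 0) hb).
  by rewrite fM_bot_e // (ent_lt phi1 (ltn0Sn 0) hb).
have -> : (l : nat) = n.*2 by lia.
rewrite fM_bot_l (ent_lt S (ltnSn n) (ltnSn n)).
exact: (hS ord_max).
Qed.

Theorem theorem6 (n : nat) (S : 'M[RR]_n.+1) (C : 'M[RR]_n)
    (lam : seq RR[i]) (mu : seq RR[i]) (phi1 phi2 : 'rV[RR]_n) (gamma : RR) :
  is_spectrum S lam -> is_spectrum C mu ->
  (forall i j : 'I_n, `|C i j| <= S (widen_ord (leqnSn n) i) (widen_ord (leqnSn n) j)) ->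
  (forall i : 'I_n.+1, 0 <= S i ord_max) ->
  (forall j : 'I_n, 0 <= phi1 0 j /\ 0 <= phi2 0 j) ->
  (forall j : 'I_n, phi1 0 j + phi2 0 j = S ord_max (widen_ord (leqnSn n) j)) ->
  0 <= gamma <= 1 ->
  (nonneg_mx (Mgam S C phi1 phi2 1 gamma) /\
   is_spectrum (Mgam S C phi1 phi2 1 gamma)
     (lam ++ [seq (gamma%:C * x)%C | x <- mu])) /\
  (nonneg_mx (Mgam S C phi1 phi2 (-1) gamma) /\
   is_spectrum (Mgam S C phi1 phi2 (-1) gamma)
     (lam ++ [seq (- (gamma%:C * x))%C | x <- mu])).
Proof.
move=> hS hC hSC hSp hphi hsum hg.
have hphi' : forall j, (j < n)%nat -> ent phi1 0 j + ent phi2 0 j = ent S n j.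
  move=> j hj; rewrite (ent_lt phi1 (ltn0Sn 0) hj) (ent_lt phi2 (ltn0Sn 0) hj).
  rewrite (ent_lt S (ltnSn n) (ltnW hj : (j < n.+1)%nat)).
  have -> : Ordinal (ltnSn n) = ord_max by apply: val_inj.
  have -> : Ordinal (ltnW hj : (j < n.+1)%nat) = widen_ord (leqnSn n) (Ordinal hj) by apply: val_inj.
  by rewrite -hsum.
split; split.
- by apply: nonneg_gen => //; rewrite normr1.
- have := spec_gen _ _ _ phi1 phi2 1 gamma _ _ hS hC hphi'.
  congr is_spectrum; congr (_ ++ _); apply: eq_map => x.
  by rewrite mul1r.
- by apply: nonneg_gen => //; rewrite normrN normr1.
- have := spec_gen _ _ _ phi1 phi2 (-1) gamma _ _ hS hC hphi'.
  congr is_spectrum; congr (_ ++ _); apply: eq_map => x.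
  by rewrite mulN1r rmorphN mulNr.
Qed.
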